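(* In every proper $4$-colouring of $K$ in which none of the $26$ copies of $H$ in $K$ contains a monochromatic triple, both $J$ and $R(J)$ have their linking vertices coloured according to option (c). In particular, all six linking diagonals are monochromatic, namely $\{L_k,L_{k+3}\}$ and $\{R(L_k),R(L_{k+3})\}$ for $k=0,1,2$.
   Context: Identify $\mathbb{R}^2$ with $\mathbb{C}$. Let $\Lambda=\{a+b e^{i\pi/3}: a,b\in\mathbb{Z}\}$. For $c\in\mathbb{C}$, let $H_c$ be the unit-distance graph on $c$ and $c+e^{i\pi k/3}$, $k=0,\dots,5$. A monochromatic triple in a colouring of a copy of $H$ is a set of three of its $7$ vertices all receiving the same colour. $J$ is the unit-distance graph on the $31$ points of $\Lambda$ of modulus at most $\sqrt7$. It is the union of the $13$ copies $H_c$, $c\in\Lambda$, $|c|\le\sqrt3$. The linking vertices of $J$ are $L_k=2e^{i\pi k/3}$ for $k\in\mathbb{Z}/6$, and a linking diagonal is a pair $\{L_k,L_{k+3}\}$. Given a colouring in which $0$ has colour $\gamma$, the linking vertices are coloured according to option (c) if there is some $k$ such that $L_k$ and $L_{k+3}$ have colour $\gamma$ and the other four linking vertices share a common colour different from $\gamma$. The same notion applies to any rotated copy of $J$ about $0$, using the images of the $L_k$. Let $R$ be the clockwise rotation about $0$ by the angle $2\arcsin(1/4)$; then $|L_k-R(L_k)|=1$. $K$ is the unit-distance graph on the $61$ points of $V(J)\cup R(V(J))$. Its $26$ copies of $H$ are the $H_c$ and the $R(H_c)$ for $c\in\Lambda$, $|c|\le\sqrt3$. *)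

(* Defs.v *)
(* points of the plane R^2 = C are pairs (x, y) of Stdlib reals. *)
From Stdlib Require Import Reals Lra Lia ZArith.
Open Scope R_scope.

Definition pt := (R * R)%type.

Definition padd (p q : pt) : pt := (fst p + fst q, snd p + snd q).
Definition pscale (r : R) (p : pt) : pt := (r * fst p, r * snd p).
Definition normsq (p : pt) : R := fst p * fst p + snd p * snd p.
Definition distsq (p q : pt) : R :=
  (fst p - fst q) * (fst p - fst q) + (snd p - snd q) * (snd p - snd q).

Definition unitdir (k : nat) : pt := (cos (INR k * PI / 3), sin (INR k * PI / 3)).

Definition origin : pt := (0, 0).

Definition inLambda (p : pt) : Prop :=
  exists a b : Z, p = padd (IZR a, 0) (pscale (IZR b) (unitdir 1)).

Definition inJ (p : pt) : Prop := inLambda p /\ normsq p <= 7.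

(* centres c of the 13 copies H_c in J: c in Lambda, |c| <= sqrt 3 *)
Definition isCentre (c : pt) : Prop := inLambda c /\ normsq c <= 3.

Definition inH (c p : pt) : Prop :=
  p = c \/ exists k : nat, (k < 6)%nat /\ p = padd c (unitdir k).

(* linking vertices L_k = 2 e^{i pi k/3}  (indices are taken mod 6 automatically,
   since unitdir is 6-periodic in k) *)
Definition L (k : nat) : pt := pscale 2 (unitdir k).

Definition theta : R := 2 * asin (1 / 4).
Definition rot (p : pt) : pt :=
  (fst p * cos theta + snd p * sin theta, - fst p * sin theta + snd p * cos theta).

Definition inK (p : pt) : Prop := inJ p \/ exists q, inJ q /\ p = rot q.

Definition proper4colouringK (col : pt -> nat) : Prop :=
  (forall p, inK p -> (col p < 4)%nat) /\
  (forall p q, inK p -> inK q -> distsq p q = 1 -> col p <> col q).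

Definition hasMonoTriple (col : pt -> nat) (S : pt -> Prop) : Prop :=
  exists p1 p2 p3, S p1 /\ S p2 /\ S p3 /\
    p1 <> p2 /\ p1 <> p3 /\ p2 <> p3 /\ col p1 = col p2 /\ col p1 = col p3.

Definition noMonoTripleInCopies (col : pt -> nat) : Prop :=
  forall c, isCentre c ->
    ~ hasMonoTriple col (inH c) /\
    ~ hasMonoTriple col (fun p => exists q, inH c q /\ p = rot q).

(* option (c) for linking vertices f k (f = L for J, f = rot o L for R(J));
   gamma = colour of the centre 0 *)
Definition optionC (col : pt -> nat) (f : nat -> pt) : Prop :=
  exists k : nat, (k < 6)%nat /\
    col (f k) = col origin /\ col (f (k + 3)%nat) = col origin /\
    exists delta : nat, delta <> col origin /\
      col (f (k + 1)%nat) = delta /\ col (f (k + 2)%nat) = delta /\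
      col (f (k + 4)%nat) = delta /\ col (f (k + 5)%nat) = delta.

(* Main.v *)
Require Import Defs.
From Stdlib Require Import Reals.
From Stdlib Require Import Lra Lia ZArith List Bool Arith.
Import ListNotations.
Open Scope R_scope.

Local Open Scope R_scope.

Definition Pl (a b : Z) : pt := padd (IZR a, 0) (pscale (IZR b) (unitdir 1)).

Lemma s3sq : sqrt 3 * sqrt 3 = 3.
Proof. apply sqrt_sqrt; lra. Qed.
Lemma s3pos : 0 < sqrt 3.
Proof. apply sqrt_lt_R0; lra. Qed.

Lemma unitdir1 : unitdir 1 = (1/2, sqrt 3 / 2).
Proof. unfold unitdir. rewrite Rmult_1_l, cos_PI3, sin_PI3. reflexivity. Qed.

Lemma Pl_eq a b : Pl a b = (IZR a + IZR b / 2, IZR b * (sqrt 3 / 2)).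
Proof. unfold Pl, padd, pscale; rewrite unitdir1; simpl. f_equal; field. Qed.

Definition r60 (p : Z * Z) : Z * Z := (- snd p, fst p + snd p)%Z.
Fixpoint dirv (k : nat) : Z * Z := match k with O => (1,0)%Z | S k => r60 (dirv k) end.

Lemma unitdir_dirv k : unitdir k = Pl (fst (dirv k)) (snd (dirv k)).
Proof.
  induction k.
  - unfold unitdir; simpl. rewrite Rmult_0_l. unfold Rdiv; rewrite Rmult_0_l, cos_0, sin_0.
    rewrite Pl_eq; simpl; f_equal; lra.
  - unfold unitdir in *. rewrite S_INR.
    replace ((INR k + 1) * PI / 3) with (INR k * PI / 3 + PI/3) by field.
    rewrite cos_plus, sin_plus, cos_PI3, sin_PI3.
    rewrite Pl_eq in IHk. injection IHk as H1 H2. rewrite H1, H2.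
    simpl. destruct (dirv k) as [a b]; simpl. rewrite Pl_eq. rewrite opp_IZR, plus_IZR.
    pose proof s3sq.
    f_equal.
    + replace (IZR b * (sqrt 3 / 2) * (sqrt 3 / 2)) with (IZR b * (sqrt 3 * sqrt 3) / 4) by field.
      rewrite H. field.
    + field.
Qed.

Lemma Pl_add a b c d : padd (Pl a b) (Pl c d) = Pl (a + c)%Z (b + d)%Z.
Proof. rewrite !Pl_eq; unfold padd; simpl; rewrite !plus_IZR; f_equal; field. Qed.

Definition nrm (p : Z * Z) : Z := (fst p * fst p + fst p * snd p + snd p * snd p)%Z.

Lemma normsq_Pl a b : normsq (Pl a b) = IZR (nrm (a, b)).
Proof.
  rewrite Pl_eq; unfold normsq, nrm; simpl. rewrite !plus_IZR, !mult_IZR.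
  pose proof s3sq.
  replace (IZR b * (sqrt 3 / 2) * (IZR b * (sqrt 3 / 2))) with (IZR b * IZR b * (sqrt 3 * sqrt 3) / 4) by field.
  rewrite H. field.
Qed.

Lemma distsq_Pl a b c d : distsq (Pl a b) (Pl c d) = IZR (nrm ((a - c)%Z, (b - d)%Z)).
Proof.
  rewrite !Pl_eq; unfold distsq, nrm; simpl. rewrite !plus_IZR, !mult_IZR, !minus_IZR.
  pose proof s3sq.
  replace ((IZR b * (sqrt 3 / 2) - IZR d * (sqrt 3 / 2)) * (IZR b * (sqrt 3 / 2) - IZR d * (sqrt 3 / 2)))
    with ((IZR b - IZR d) * (IZR b - IZR d) * (sqrt 3 * sqrt 3) / 4) by field.
  rewrite H. field.
Qed.

Lemma Pl_inj a b c d : Pl a b = Pl c d -> a = c /\ b = d.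
Proof.
  rewrite !Pl_eq. intro H. injection H as H1 H2. pose proof s3pos.
  assert (IZR b = IZR d) by nra. apply eq_IZR in H0. subst. split; auto.
  apply eq_IZR. lra.
Qed.

Lemma Pl00 : Pl 0 0 = origin.
Proof. rewrite Pl_eq; unfold origin; f_equal; simpl; lra. Qed.

Lemma L_Pl k : L k = Pl (2 * fst (dirv k))%Z (2 * snd (dirv k))%Z.
Proof. unfold L. rewrite unitdir_dirv, !Pl_eq. unfold pscale. rewrite !mult_IZR. simpl. f_equal; field. Qed.

Lemma dirv6 k : dirv (6 + k)%nat = dirv k.
Proof. simpl. destruct (dirv k) as [a b]. unfold r60; simpl. f_equal; ring. Qed.

Lemma L6 k : L (6 + k)%nat = L k.
Proof. rewrite !L_Pl, dirv6. reflexivity. Qed.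

Lemma L_mod k : L k = L (k mod 6)%nat.
Proof.
  rewrite (Nat.div_mod k 6) at 1 by lia. generalize (k mod 6)%nat. induction (k / 6)%nat; intro r.
  - f_equal; lia.
  - replace (6 * S n + r)%nat with (6 + (6 * n + r))%nat by lia. rewrite L6; auto.
Qed.

Lemma inJ_Pl a b : (nrm (a, b) <= 7)%Z -> inJ (Pl a b).
Proof. intro H. split. exists a, b; reflexivity. rewrite normsq_Pl. apply IZR_le in H. exact H. Qed.

Lemma isCentre_Pl a b : (nrm (a, b) <= 3)%Z -> isCentre (Pl a b).
Proof. intro H. split. exists a, b; reflexivity. rewrite normsq_Pl. apply IZR_le in H. exact H. Qed.

Lemma costh : cos theta = 7/8.
Proof. unfold theta. rewrite cos_2a_sin, sin_asin by lra. lra. Qed.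

Lemma cs1r : cos theta * cos theta + sin theta * sin theta = 1.
Proof. pose proof (sin2_cos2 theta). unfold Rsqr in H. lra. Qed.

Lemma distsq_rot p q : distsq (rot p) (rot q) = distsq p q.
Proof.
  destruct p as [x y], q as [u v]; unfold distsq, rot; simpl. pose proof cs1r.
  set (c := cos theta) in *. set (s := sin theta) in *.
  transitivity (((x-u)*(x-u) + (y-v)*(y-v)) * (c*c+s*s)). ring. rewrite H; ring.
Qed.

Lemma rot_inj p q : rot p = rot q -> p = q.
Proof.
  destruct p as [x y], q as [u v]; unfold rot; simpl. intro H. injection H as H1 H2.
  pose proof cs1r. set (c := cos theta) in *. set (s := sin theta) in *.
  assert (E1 : (x-u)*c + (y-v)*s = 0) by lra.
  assert (E2 : -(x-u)*s + (y-v)*c = 0) by lra.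
  assert (x - u = c * ((x-u)*c + (y-v)*s) - s * (-(x-u)*s + (y-v)*c)).
  { transitivity ((x-u) * (c*c+s*s)). rewrite H; ring. ring. }
  assert (y - v = s * ((x-u)*c + (y-v)*s) + c * (-(x-u)*s + (y-v)*c)).
  { transitivity ((y-v) * (c*c+s*s)). rewrite H; ring. ring. }
  rewrite E1, E2 in *. f_equal; lra.
Qed.

Lemma rot_origin : rot origin = origin.
Proof. unfold rot, origin; simpl; f_equal; ring. Qed.

Lemma dist_L_rot k : distsq (L k) (rot (L k)) = 1.
Proof.
  assert (normsq (L k) = 4).
  { rewrite L_Pl, normsq_Pl. destruct (dirv k) as [a b] eqn:E.
    assert (forall k, nrm (dirv k) = 1%Z) as Hn.
    { induction k0; simpl; auto. unfold nrm, r60 in *; simpl. destruct (dirv k0); simpl in *. lia. }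
    specialize (Hn k). rewrite E in Hn. cbn [fst snd].
    replace (nrm ((2*a)%Z, (2*b)%Z)) with 4%Z. reflexivity. unfold nrm in *; cbn [fst snd] in *. lia. }
  destruct (L k) as [x y]. unfold normsq, distsq, rot in *; simpl in *.
  pose proof cs1r. pose proof costh.
  set (c := cos theta) in *. set (s := sin theta) in *.
  transitivity ((x*x+y*y)*(1 - 2*c + (c*c+s*s))). ring. rewrite H0, H, H1. lra.
Qed.

Local Open Scope nat_scope.

Inductive cstr := CE (i j : nat) | CT (i j k : nat) | CP (l : list nat).

Definition patb (xs : list nat) : bool :=
  let o := nth 0 xs 0 in
  let l j := nth (1 + j mod 6) xs 0 in
  forallb (fun j => l j =? o) (seq 0 6)
  || existsb (fun k => negb (l k =? o) && (l (k+1) =? l k) && (l (k+2) =? o) && (l (k+3) =? o)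
                        && (l (k+4) =? o) && (l (k+5) =? o)) (seq 0 6)
  || existsb (fun k => (l k =? o) && (l (k+3) =? o) && negb (l (k+1) =? o) && (l (k+2) =? l (k+1))
                        && (l (k+4) =? l (k+1)) && (l (k+5) =? l (k+1))) (seq 0 6).

Definition satf (f : nat -> nat) (c : cstr) : bool :=
  match c with
  | CE i j => negb (f i =? f j)
  | CT i j k => negb ((f i =? f j) && (f i =? f k))
  | CP l => patb (map f l)
  end.

Definition lk (env : list nat) (i : nat) := nth i env 0.
Definition sat env c := satf (lk env) c.

Definition cmax c := match c with CE i j => max i j | CT i j k => max i (max j k) | CP l => fold_right max 0 l end.

Fixpoint dfs (tbl : list (list cstr)) (goal : list nat -> bool) (fuel : nat) (env : list nat) : bool :=
  match fuel with
  | O => goal env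
  | S m => forallb (fun v => let e := env ++ [v] in
             if forallb (sat e) (nth (length env) tbl []) then dfs tbl goal m e else true) [0;1;2;3]
  end.

Definition mktbl (n : nat) (cs : list cstr) := map (fun k => filter (fun c => cmax c =? k) cs) (seq 0 n).

Lemma lk_map f m i : i < m -> lk (map f (seq 0 m)) i = f i.
Proof.
  intro H. unfold lk. rewrite nth_indep with (d' := f 0) by (rewrite length_map, length_seq; auto).
  rewrite map_nth, seq_nth; auto.
Qed.

Lemma sat_map f m c : cmax c < m -> sat (map f (seq 0 m)) c = satf f c.
Proof.
  intro H. unfold sat. destruct c; simpl in *.
  - pose proof (Nat.le_max_l i j); pose proof (Nat.le_max_r i j).
    rewrite !lk_map by lia. auto.
  - pose proof (Nat.le_max_l i (max j k)); pose proof (Nat.le_max_r i (max j k)).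
    pose proof (Nat.le_max_l j k); pose proof (Nat.le_max_r j k).
    rewrite !lk_map by lia. auto.
  - f_equal. apply map_ext_in. intros a Ha. apply lk_map.
    assert (a <= fold_right max 0 l).
    { clear H. induction l; simpl in *. contradiction.
      pose proof (Nat.le_max_l a0 (fold_right max 0 l)); pose proof (Nat.le_max_r a0 (fold_right max 0 l)).
      destruct Ha; subst; [lia|]. specialize (IHl H1). lia. }
    lia.
Qed.

Lemma dfs_sound tbl goal f n :
  (forall i, i < n -> f i < 4) ->
  (forall k c, k < n -> In c (nth k tbl []) -> cmax c <= k /\ satf f c = true) ->
  dfs tbl goal n [] = true -> goal (map f (seq 0 n)) = true.
Proof.
  intros Hr Hc.
  assert (forall m k, k + m = n -> dfs tbl goal m (map f (seq 0 k)) = true -> goal (map f (seq 0 n)) = true).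
  { induction m; intros k Hk Hd.
    - simpl in Hd. replace k with n in Hd by lia. auto.
    - cbn [dfs] in Hd. apply (IHm (S k)). lia.
      rewrite forallb_forall in Hd. specialize (Hd (f k)).
      assert (In (f k) [0;1;2;3]). { specialize (Hr k ltac:(lia)). simpl. lia. }
      specialize (Hd H). rewrite length_map, length_seq in Hd.
      replace (map f (seq 0 k) ++ [f k]) with (map f (seq 0 (S k))) in Hd
        by (rewrite seq_S, map_app; reflexivity).
      destruct (forallb _ _) eqn:Hf in Hd; auto.
      exfalso. apply not_true_iff_false in Hf. apply Hf.
      apply forallb_forall. intros c Hin. destruct (Hc k c ltac:(lia) Hin).
      rewrite sat_map by lia. auto. }
  intro. apply (H n 0); auto.
Qed.

Lemma nth_map_seq {A} (F : nat -> A) n k d : k < n -> nth k (map F (seq 0 n)) d = F k.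
Proof.
  intro H. rewrite nth_indep with (d' := F 0) by (rewrite length_map, length_seq; auto).
  rewrite map_nth, seq_nth; auto.
Qed.

Lemma mktbl_spec n cs k c : k < n -> In c (nth k (mktbl n cs) []) -> In c cs /\ cmax c = k.
Proof.
  intros Hk Hin. unfold mktbl in Hin.
  rewrite nth_map_seq in Hin by auto.
  apply filter_In in Hin. destruct Hin. split; auto. apply Nat.eqb_eq; auto.
Qed.

Local Open Scope nat_scope.
Definition V : list (Z*Z) := [(0%Z,0%Z); (1%Z,0%Z); (0%Z,1%Z); ((-1)%Z,1%Z); ((-1)%Z,0%Z); (0%Z,(-1)%Z); (1%Z,(-1)%Z); (2%Z,0%Z); (1%Z,1%Z); (2%Z,(-1)%Z); (0%Z,2%Z); ((-1)%Z,2%Z); ((-2)%Z,2%Z); ((-2)%Z,1%Z); ((-2)%Z,0%Z); ((-1)%Z,(-1)%Z); (0%Z,(-2)%Z); (1%Z,(-2)%Z); (2%Z,(-2)%Z); (2%Z,1%Z); (3%Z,(-1)%Z); (1%Z,2%Z); (3%Z,(-2)%Z); ((-1)%Z,3%Z); ((-2)%Z,3%Z); ((-3)%Z,2%Z); ((-3)%Z,1%Z); ((-2)%Z,(-1)%Z); ((-1)%Z,(-2)%Z); (1%Z,(-3)%Z); (2%Z,(-3)%Z)] .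
Definition cs1 : list cstr := [CE 0 1; CE 0 2; CE 0 3; CE 0 4; CE 0 5; CE 0 6; CE 1 2; CE 1 6; CE 1 7; CE 1 8; CE 1 9; CE 2 3; CE 2 8; CE 2 10; CE 2 11; CE 3 4; CE 3 11; CE 3 12; CE 3 13; CE 4 5; CE 4 13; CE 4 14; CE 4 15; CE 5 6; CE 5 15; CE 5 16; CE 5 17; CE 6 9; CE 6 17; CE 6 18; CE 7 8; CE 7 9; CE 7 19; CE 7 20; CE 8 10; CE 8 19; CE 8 21; CE 9 18; CE 9 20; CE 9 22; CE 10 11; CE 10 21; CE 10 23; CE 11 12; CE 11 23; CE 11 24; CE 12 13; CE 12 24; CE 12 25; CE 13 14; CE 13 25; CE 13 26; CE 14 15; CE 14 26; CE 14 27; CE 15 16; CE 15 27; CE 15 28; CE 16 17; CE 16 28; CE 16 29; CE 17 18; CE 17 29; CE 17 30; CE 18 22; CE 18 30; CE 19 21; CE 20 22; CE 23 24; CE 25 26; CE 27 28; CE 29 30;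
 CT 0 1 2; CT 0 1 3; CT 0 1 4; CT 0 1 5; CT 0 1 6; CT 0 1 7; CT 0 1 8; CT 0 1 9; CT 0 1 10; CT 0 1 11; CT 0 1 17; CT 0 1 18; CT 0 2 3; CT 0 2 4; CT 0 2 5; CT 0 2 6; CT 0 2 7; CT 0 2 8; CT 0 2 9; CT 0 2 10; CT 0 2 11; CT 0 2 12; CT 0 2 13; CT 0 3 4; CT 0 3 5; CT 0 3 6; CT 0 3 8; CT 0 3 10; CT 0 3 11; CT 0 3 12; CT 0 3 13; CT 0 3 14; CT 0 3 15; CT 0 4 5; CT 0 4 6; CT 0 4 11; CT 0 4 12; CT 0 4 13; CT 0 4 14; CT 0 4 15; CT 0 4 16; CT 0 4 17; CT 0 5 6; CT 0 5 9; CT 0 5 13; CT 0 5 14; CT 0 5 15; CT 0 5 16; CT 0 5 17; CT 0 5 18; CT 0 6 7; CT 0 6 8; CT 0 6 9; CT 0 6 15; CT 0 6 16; CT 0 6 17; CT 0 6 18; CT 0 7 8; CT 0 7 9; CT 0 8 9; CT 0 8 10; CT 0 8 11; CT 0 9 17; CT 0 9 18; CT 0 10 11; CT 0 11 12; CT 0 11 13; CT 0 12 13; CT 0 13 14; CT 0 13 15; CT 0 14 15; CT 0 15 16; CT 0 15 17; CT 0 16 17; CT 0 17 18; CT 1 2 3; CT 1 2 4; CT 1 2 5; CT 1 2 6; CT 1 2 7; CT 1 2 8; CT 1 2 9; CT 1 2 10; CT 1 2 11; CT 1 2 19; CT 1 2 21; CT 1 3 4; CT 1 3 5; CT 1 3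 6; CT 1 3 8; CT 1 3 10; CT 1 3 11; CT 1 4 5; CT 1 4 6; CT 1 5 6; CT 1 5 9; CT 1 5 17; CT 1 5 18; CT 1 6 7; CT 1 6 8; CT 1 6 9; CT 1 6 17; CT 1 6 18; CT 1 6 20; CT 1 6 22; CT 1 7 8; CT 1 7 9; CT 1 7 10; CT 1 7 18; CT 1 7 19; CT 1 7 20; CT 1 7 21; CT 1 7 22; CT 1 8 9; CT 1 8 10; CT 1 8 11; CT 1 8 19; CT 1 8 21; CT 1 9 17; CT 1 9 18; CT 1 9 20; CT 1 9 22; CT 1 10 11; CT 1 10 19; CT 1 10 21; CT 1 17 18; CT 1 18 20; CT 1 18 22; CT 1 19 21; CT 1 20 22; CT 2 3 4; CT 2 3 5; CT 2 3 6; CT 2 3 8; CT 2 3 10; CT 2 3 11; CT 2 3 12; CT 2 3 13; CT 2 3 23; CT 2 3 24; CT 2 4 5; CT 2 4 6; CT 2 4 11; CT 2 4 12; CT 2 4 13; CT 2 5 6; CT 2 6 7; CT 2 6 8; CT 2 6 9; CT 2 7 8; CT 2 7 9; CT 2 7 10; CT 2 7 19; CT 2 7 21; CT 2 8 9; CT 2 8 10; CT 2 8 11; CT 2 8 19; CT 2 8 21; CT 2 10 11; CT 2 10 12; CT 2 10 19; CT 2 10 21; CT 2 10 23; CT 2 10 24; CT 2 11 12; CT 2 11 13; CT 2 11 23; CT 2 11 24; CT 2 12 13; CT 2 12 23; CT 2 12 24; CT 2 19 21; CT 2 23 24; CT 3 4 5; CT 3 4 6; CT 3 4 11; CT 3 4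 12; CT 3 4 13; CT 3 4 14; CT 3 4 15; CT 3 4 25; CT 3 4 26; CT 3 5 6; CT 3 5 13; CT 3 5 14; CT 3 5 15; CT 3 8 10; CT 3 8 11; CT 3 10 11; CT 3 10 12; CT 3 10 23; CT 3 10 24; CT 3 11 12; CT 3 11 13; CT 3 11 23; CT 3 11 24; CT 3 12 13; CT 3 12 14; CT 3 12 23; CT 3 12 24; CT 3 12 25; CT 3 12 26; CT 3 13 14; CT 3 13 15; CT 3 13 25; CT 3 13 26; CT 3 14 15; CT 3 14 25; CT 3 14 26; CT 3 23 24; CT 3 25 26; CT 4 5 6; CT 4 5 13; CT 4 5 14; CT 4 5 15; CT 4 5 16; CT 4 5 17; CT 4 5 27; CT 4 5 28; CT 4 6 15; CT 4 6 16; CT 4 6 17; CT 4 11 12; CT 4 11 13; CT 4 12 13; CT 4 12 14; CT 4 12 25; CT 4 12 26; CT 4 13 14; CT 4 13 15; CT 4 13 25; CT 4 13 26; CT 4 14 15; CT 4 14 16; CT 4 14 25; CT 4 14 26; CT 4 14 27; CT 4 14 28; CT 4 15 16; CT 4 15 17; CT 4 15 27; CT 4 15 28; CT 4 16 17; CT 4 16 27; CT 4 16 28; CT 4 25 26; CT 4 27 28; CT 5 6 9; CT 5 6 15; CT 5 6 16; CT 5 6 17; CT 5 6 18; CT 5 6 29; CT 5 6 30; CT 5 9 17; CT 5 9 18; CT 5 13 14; CT 5 13 15; CT 5 14 15; CT 5 14 16; CT 5 14 27; CT 5 14 28; CT 5 15 16; CT 5 15 17; CT 5 15 27; CT 5 15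 28; CT 5 16 17; CT 5 16 18; CT 5 16 27; CT 5 16 28; CT 5 16 29; CT 5 16 30; CT 5 17 18; CT 5 17 29; CT 5 17 30; CT 5 18 29; CT 5 18 30; CT 5 27 28; CT 5 29 30; CT 6 7 8; CT 6 7 9; CT 6 7 18; CT 6 7 20; CT 6 7 22; CT 6 8 9; CT 6 9 17; CT 6 9 18; CT 6 9 20; CT 6 9 22; CT 6 15 16; CT 6 15 17; CT 6 16 17; CT 6 16 18; CT 6 16 29; CT 6 16 30; CT 6 17 18; CT 6 17 29; CT 6 17 30; CT 6 18 20; CT 6 18 22; CT 6 18 29; CT 6 18 30; CT 6 20 22; CT 6 29 30; CT 7 8 9; CT 7 8 10; CT 7 8 19; CT 7 8 21; CT 7 9 18; CT 7 9 20; CT 7 9 22; CT 7 10 19; CT 7 10 21; CT 7 18 20; CT 7 18 22; CT 7 19 21; CT 7 20 22; CT 8 10 11; CT 8 10 19; CT 8 10 21; CT 8 19 21; CT 9 17 18; CT 9 18 20; CT 9 18 22; CT 9 20 22; CT 10 11 12; CT 10 11 23; CT 10 11 24; CT 10 12 23; CT 10 12 24; CT 10 19 21; CT 10 23 24; CT 11 12 13; CT 11 12 23; CT 11 12 24; CT 11 23 24; CT 12 13 14; CT 12 13 25; CT 12 13 26; CT 12 14 25; CT 12 14 26; CT 12 23 24; CT 12 25 26; CT 13 14 15; CT 13 14 25; CT 13 14 26; CT 13 25 26; CT 14 15 16; CT 14 15 27; CT 14 15 28; CT 14 16 27; CT 14 16 28; CT 14 25 26; CT 14 27 28; CT 15 16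 17; CT 15 16 27; CT 15 16 28; CT 15 27 28; CT 16 17 18; CT 16 17 29; CT 16 17 30; CT 16 18 29; CT 16 18 30; CT 16 27 28; CT 16 29 30; CT 17 18 29; CT 17 18 30; CT 17 29 30; CT 18 20 22; CT 18 29 30] .
Definition Lidx : list nat := [0; 7; 10; 12; 14; 16; 18].

Definition peq (p q : Z*Z) : bool := Z.eqb (fst p) (fst q) && Z.eqb (snd p) (snd q).
Definition zadd (p q : Z*Z) : Z*Z := (fst p + fst q, snd p + snd q)%Z.
Definition memH (c p : Z*Z) : bool := peq p c || existsb (fun k => peq p (zadd c (dirv k))) (seq 0 6).
Definition Vn i := nth i V (0,0)%Z.
Definition valid (c : cstr) : bool :=
  match c with
  | CE i j => Z.leb (nrm (Vn i)) 7 && Z.leb (nrm (Vn j)) 7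
              && Z.eqb (nrm (fst (Vn i) - fst (Vn j), snd (Vn i) - snd (Vn j))%Z) 1
  | CT i j k => negb (peq (Vn i) (Vn j)) && negb (peq (Vn i) (Vn k)) && negb (peq (Vn j) (Vn k))
              && existsb (fun c => Z.leb (nrm c) 3 && memH c (Vn i) && memH c (Vn j) && memH c (Vn k)) V
  | CP _ => false
  end.

Lemma valid_all : forallb valid cs1 = true.
Proof. vm_compute. reflexivity. Qed.

Definition tbl1 := mktbl 31 cs1.
Definition goal1 (env : list nat) := patb (map (lk env) Lidx).

Lemma dfs1 : dfs tbl1 goal1 31 [] = true.
Proof. vm_compute. reflexivity. Qed.

Local Open Scope nat_scope.

Lemma peq_spec p q : peq p q = true <-> p = q.
Proof.
  destruct p as [a b], q as [c d]; unfold peq; simpl. rewrite andb_true_iff, !Z.eqb_eq.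
  split. intros [-> ->]; auto. intro H; inversion H; auto.
Qed.

Definition PlZ (p : Z*Z) := Pl (fst p) (snd p).

Lemma memH_inH c p : memH c p = true -> inH (PlZ c) (PlZ p).
Proof.
  unfold memH. intro H. apply orb_prop in H. destruct H as [H|H].
  - apply peq_spec in H. subst. left. reflexivity.
  - apply existsb_exists in H. destruct H as [k [Hk H]]. apply peq_spec in H. subst.
    apply in_seq in Hk. right. exists k. split. lia.
    unfold PlZ, zadd. rewrite unitdir_dirv, Pl_add. reflexivity.
Qed.

Lemma PlZ_neq p q : peq p q = false -> PlZ p <> PlZ q.
Proof.
  intros H E. destruct p as [a b], q as [c d]. unfold PlZ in E; simpl in E.
  apply Pl_inj in E. destruct E; subst. unfold peq in H; simpl in H. rewrite !Z.eqb_refl in H. discriminate.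
Qed.

Lemma valid_sat (g : pt -> nat) :
  (forall p q, inJ p -> inJ q -> distsq p q = 1%R -> g p <> g q) ->
  (forall c, isCentre c -> ~ hasMonoTriple g (inH c)) ->
  forall c, valid c = true -> satf (fun i => g (PlZ (Vn i))) c = true.
Proof.
  intros G2 G3 c Hv. destruct c; unfold valid in Hv; cbn [satf].
  - apply andb_prop in Hv as [Hv H3]. apply andb_prop in Hv as [H1 H2].
    apply Z.leb_le in H1, H2. apply Z.eqb_eq in H3.
    apply negb_true_iff, Nat.eqb_neq. apply G2.
    + destruct (Vn i); apply inJ_Pl; auto.
    + destruct (Vn j); apply inJ_Pl; auto.
    + destruct (Vn i), (Vn j). unfold PlZ; simpl in *. rewrite distsq_Pl, H3. reflexivity.
  - apply andb_prop in Hv as [Hv H4]. apply andb_prop in Hv as [Hv H3]. apply andb_prop in Hv as [H1 H2].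
    apply negb_true_iff in H1, H2, H3.
    apply existsb_exists in H4. destruct H4 as [c0 [_ Hc]].
    apply andb_prop in Hc as [Hc M3]. apply andb_prop in Hc as [Hc M2]. apply andb_prop in Hc as [Hc M1].
    apply Z.leb_le in Hc.
    apply negb_true_iff. destruct (g (PlZ (Vn i)) =? g (PlZ (Vn j))) eqn:E1; auto.
    destruct (g (PlZ (Vn i)) =? g (PlZ (Vn k))) eqn:E2; auto.
    exfalso. apply Nat.eqb_eq in E1, E2.
    apply (G3 (PlZ c0)). { destruct c0; apply isCentre_Pl; auto. }
    exists (PlZ (Vn i)), (PlZ (Vn j)), (PlZ (Vn k)).
    repeat split; try (apply memH_inH; auto); try (apply PlZ_neq; auto); auto.
  - discriminate.
Qed.

Lemma V_bound : forallb (fun p => Z.leb (nrm p) 7) V = true.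
Proof. vm_compute. reflexivity. Qed.

Lemma Lidx_vals : map Vn Lidx = [(0,0); (2,0); (0,2); (-2,2); (-2,0); (0,-2); (2,-2)]%Z.
Proof. vm_compute. reflexivity. Qed.

Lemma J_lemma (g : pt -> nat) :
  (forall p, inJ p -> g p < 4) ->
  (forall p q, inJ p -> inJ q -> distsq p q = 1%R -> g p <> g q) ->
  (forall c, isCentre c -> ~ hasMonoTriple g (inH c)) ->
  patb [g origin; g (L 0); g (L 1); g (L 2); g (L 3); g (L 4); g (L 5)] = true.
Proof.
  intros G1 G2 G3.
  set (f := fun i => g (PlZ (Vn i))).
  assert (H := dfs_sound tbl1 goal1 f 31).
  assert (Hg : goal1 (map f (seq 0 31)) = true).
  { apply H.
    - intros i Hi. unfold f. apply G1. pose proof V_bound as Hb. rewrite forallb_forall in Hb.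
      assert (In (Vn i) V) by (apply nth_In; simpl; lia).
      specialize (Hb _ H0). apply Z.leb_le in Hb. destruct (Vn i). apply inJ_Pl; auto.
    - intros k c Hk Hin. apply mktbl_spec in Hin; auto. destruct Hin as [Hin Hm]. split. lia.
      apply valid_sat; auto. pose proof valid_all as Hv. rewrite forallb_forall in Hv. auto.
    - exact dfs1. }
  unfold goal1 in Hg.
  rewrite (map_ext_in (lk (map f (seq 0 31))) f) in Hg.
  2:{ intros a Ha. apply lk_map. simpl in Ha. lia. }
  replace (map f Lidx) with (map (fun p => g (PlZ p)) (map Vn Lidx)) in Hg by (rewrite map_map; reflexivity).
  rewrite Lidx_vals in Hg. rewrite !L_Pl, <- Pl00. exact Hg.
Qed.

Local Open Scope nat_scope.

Definition optcb (F : nat -> nat) (o : nat) : bool :=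
  existsb (fun k => (F k =? o) && (F (k+3) =? o) && negb (F (k+1) =? o) && (F (k+2) =? F (k+1))
                    && (F (k+4) =? F (k+1)) && (F (k+5) =? F (k+1))) (seq 0 6).

Definition final2 (env : list nat) : bool :=
  let o := lk env 0 in
  let lL j := lk env (1 + j mod 6) in
  let lR j := lk env (7 + j mod 6) in
  optcb lL o && optcb lR o && forallb (fun k => (lL k =? lL (k+3)) && (lR k =? lR (k+3))) (seq 0 3).

Definition cs2 : list cstr := [CP [0;1;2;3;4;5;6]; CP [0;7;8;9;10;11;12];
  CE 1 7; CE 2 8; CE 3 9; CE 4 10; CE 5 11; CE 6 12].

Lemma dfs2 : dfs (mktbl 13 cs2) final2 13 [] = true.
Proof. vm_compute. reflexivity. Qed.

Lemma optc_ok F G o : (forall j, F j = G j) -> optcb F o = true ->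
  exists k, k < 6 /\ G k = o /\ G (k+3) = o /\ exists d, d <> o /\ G (k+1) = d /\ G (k+2) = d /\ G (k+4) = d /\ G (k+5) = d.
Proof.
  intros E H. unfold optcb in H. apply existsb_exists in H. destruct H as [k [Hk H]].
  apply in_seq in Hk. rewrite !E in H.
  repeat (apply andb_prop in H; destruct H as [H ?]).
  exists k. split. lia. apply Nat.eqb_eq in H. split; auto.
  repeat match goal with Hx : (_ =? _) = true |- _ => apply Nat.eqb_eq in Hx end.
  match goal with Hx : negb _ = true |- _ => apply negb_true_iff, Nat.eqb_neq in Hx end.
  split; auto. exists (G (k+1)). repeat split; auto.
Qed.

Lemma stage2 (xs : list nat) :
  length xs = 13 -> Forall (fun x => x < 4) xs ->
  patb (firstn 7 xs) = true -> patb (nth 0 xs 0 :: skipn 7 xs) = true ->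
  (forall k, k < 6 -> nth (1 + k) xs 0 <> nth (7 + k) xs 0) ->
  final2 xs = true.
Proof.
  intros Hl Hf P1 P2 He.
  set (f := fun i => nth i xs 0).
  assert (Ex : map f (seq 0 13) = xs).
  { destruct xs as [|x0 [|x1 [|x2 [|x3 [|x4 [|x5 [|x6 [|x7 [|x8 [|x9 [|x10 [|x11 [|x12 [|]]]]]]]]]]]]]];
      simpl in Hl; try discriminate. reflexivity. }
  rewrite <- Ex. apply dfs_sound with (tbl := mktbl 13 cs2).
  - intros i Hi. unfold f. rewrite Forall_forall in Hf. apply Hf. apply nth_In. lia.
  - intros k c Hk Hin. apply mktbl_spec in Hin; auto. destruct Hin as [Hin Hm]. split. lia.
    unfold cs2 in Hin. simpl in Hin.
    destruct xs as [|x0 [|x1 [|x2 [|x3 [|x4 [|x5 [|x6 [|x7 [|x8 [|x9 [|x10 [|x11 [|x12 [|]]]]]]]]]]]]]];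
      simpl in Hl; try discriminate.
    unfold f; simpl in *.
    repeat destruct Hin as [<-|Hin]; simpl; auto; try contradiction;
    try (apply negb_true_iff, Nat.eqb_neq; first [apply (He 0)|apply (He 1)|apply (He 2)|apply (He 3)|apply (He 4)|apply (He 5)]; lia).
  - exact dfs2.
Qed.

Local Open Scope R_scope.

Lemma inJ_L k : inJ (L k).
Proof.
  rewrite L_Pl. apply inJ_Pl.
  assert (forall k, nrm (dirv k) = 1%Z) as Hn.
  { induction k0; simpl; auto. unfold nrm, r60 in *; simpl. destruct (dirv k0); simpl in *. lia. }
  specialize (Hn k). destruct (dirv k) as [a b]. unfold nrm in *; cbn [fst snd] in *. lia.
Qed.

Lemma inJ_origin : inJ origin.
Proof. rewrite <- Pl00. apply inJ_Pl. vm_compute. discriminate. Qed.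

Theorem mainTheorem4 (col : pt -> nat) :
  proper4colouringK col ->
  noMonoTripleInCopies col ->
  (optionC col L /\ optionC col (fun k => rot (L k))) /\
  (forall k : nat, (k < 3)%nat ->
     col (L k) = col (L (k + 3)%nat) /\
     col (rot (L k)) = col (rot (L (k + 3)%nat))).
Proof.
  intros [P1 P2] NM.
  assert (JL := J_lemma col).
  assert (JR := J_lemma (fun p => col (rot p))).
  assert (HK1 : forall p, inJ p -> inK p) by (intros; left; auto).
  assert (HK2 : forall p, inJ p -> inK (rot p)) by (intros p Hp; right; exists p; auto).
  specialize (JL (fun p Hp => P1 p (HK1 p Hp))).
  specialize (JL (fun p q Hp Hq Hd => P2 p q (HK1 p Hp) (HK1 q Hq) Hd)).
  specialize (JL (fun c Hc => proj1 (NM c Hc))).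
  specialize (JR (fun p Hp => P1 _ (HK2 p Hp))).
  assert (JR2 := JR (fun p q Hp Hq Hd => P2 _ _ (HK2 p Hp) (HK2 q Hq) (eq_trans (distsq_rot p q) Hd))).
  clear JR.
  assert (JR3 : patb [col origin; col (rot (L 0)); col (rot (L 1)); col (rot (L 2)); col (rot (L 3));
                      col (rot (L 4)); col (rot (L 5))] = true).
  { rewrite <- rot_origin at 1. apply JR2. intros c Hc [p1 [p2 [p3 [H1 [H2 [H3 [H12 [H13 [H23 [E2 E3]]]]]]]]]].
    apply (proj2 (NM c Hc)). exists (rot p1), (rot p2), (rot p3).
    repeat split; try (intro E; apply rot_inj in E; contradiction); auto;
    [exists p1|exists p2|exists p3]; auto. }
  clear JR2.
  set (xs := [col origin; col (L 0); col (L 1); col (L 2); col (L 3); col (L 4); col (L 5);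
              col (rot (L 0)); col (rot (L 1)); col (rot (L 2)); col (rot (L 3)); col (rot (L 4)); col (rot (L 5))]).
  assert (F : final2 xs = true).
  { apply stage2.
    - reflexivity.
    - unfold xs. repeat apply Forall_cons; try apply Forall_nil; apply P1; first [apply HK1, inJ_origin | apply HK1, inJ_L | apply HK2, inJ_L].
    - exact JL.
    - exact JR3.
    - intros k Hk. destruct k as [|[|[|[|[|[|]]]]]]; try lia; apply P2; (apply HK1, inJ_L || apply HK2, inJ_L || apply dist_L_rot). }
  unfold final2, lk in F. apply andb_prop in F as [F D]. apply andb_prop in F as [FL FR].
  assert (EL : forall j, nth (1 + j mod 6) xs 0%nat = col (L j)).
  { intro j. rewrite (L_mod j). assert (j mod 6 < 6)%nat by (apply Nat.mod_upper_bound; lia).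
    destruct (j mod 6) as [|[|[|[|[|[|]]]]]]; try lia; reflexivity. }
  assert (ER : forall j, nth (7 + j mod 6) xs 0%nat = col (rot (L j))).
  { intro j. rewrite (L_mod j). assert (j mod 6 < 6)%nat by (apply Nat.mod_upper_bound; lia).
    destruct (j mod 6) as [|[|[|[|[|[|]]]]]]; try lia; reflexivity. }
  split; [split|].
  - exact (optc_ok _ (fun j => col (L j)) _ EL FL).
  - exact (optc_ok _ (fun j => col (rot (L j))) _ ER FR).
  - intros k Hk. rewrite forallb_forall in D. assert (In k (seq 0 3)) by (apply in_seq; lia).
    specialize (D k H). apply andb_prop in D as [D1 D2]. apply Nat.eqb_eq in D1, D2.
    rewrite EL, EL in D1. rewrite ER, ER in D2. auto.
Qed.
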